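(* Let $\Gamma:\Delta\to\mathbb{R}_+$ be a completely monotone double kernel (see context) whose measure $\mu$ satisfies $0<\mu(\mathbb{R})<+\infty$, extended to the diagonal by $\Gamma(t,t)=\mu(\mathbb{R})$. Then $\Gamma$ preserves nonnegativity.
   Context: $\Delta=\{(t,s)\in\mathbb{R}_+^2:s\le t\}$, $\mathring\Delta=\{(t,s):0<s<t\}$. A function $\Gamma:\mathring\Delta\to\mathbb{R}_+$ is a completely monotone double kernel if there exist a Borel measure $\mu$ on $\mathbb{R}$ finite on compact sets and a family $(\rho(\alpha,\cdot))_{\alpha\in\mathbb{R}}$ of Borel measures on $\mathbb{R}_+$, finite on compact sets, such that $\rho(\beta,\cdot)-\rho(\alpha,\cdot)$ is a nonnegative measure whenever $\alpha\le\beta$, with either $\Gamma(t,s)=\int_{\mathbb{R}}e^{-\rho(\alpha,(s,t])}\mu(\mathrm{d}\alpha)$ for all $(t,s)\in\mathring\Delta$, or $\Gamma(t,s)=\int_{\mathbb{R}}e^{-\rho(\alpha,[s,t))}\mu(\mathrm{d}\alpha)$ for all $(t,s)\in\mathring\Delta$, and $\Gamma(t,s)<\infty$ for $t>s$. A kernel $\Gamma:\Delta\to\mathbb{R}_+$ preserves nonnegativity if for every $T>0$, every $K\in\mathbb{N}^*$, $x_1,\dots,x_K\in\mathbb{R}$ and $0\le t_1<\dots<t_K<T$ with $\sum_{k'=1}^kx_{k'}\Gamma(t_k,t_{k'})\ge0$ for all $k\in\{1,\dots,K\}$, one has $\sum_{k:t_k\le t}x_k\Gamma(t,t_k)\ge0$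 for all $t\in[0,T]$. *)

(* Defs.v *)
From HB Require Import structures.
From mathcomp Require Import all_boot all_order all_algebra.
From mathcomp Require Import all_classical all_reals all_analysis.
Set Implicit Arguments. Unset Strict Implicit. Unset Printing Implicit Defensive.
Import Order.TTheory GRing.Theory Num.Theory.
Import numFieldNormedType.Exports.
Local Open Scope classical_set_scope.
Local Open Scope ring_scope.

Definition finite_on_compacts (R : realType) (m : {measure set R -> \bar R}) : Prop :=
  forall K : set R, compact K -> (m K < +oo)%E.

Definition supported_on_Rplus (R : realType) (m : {measure set R -> \bar R}) : Prop :=
  m [set x : R | x < 0] = 0%E.

(** [nu - m] is a nonnegative measure, i.e. [nu = m + d] for a measure [d]. *)
Definition measure_le_diff (R : realType) (m nu : {measure set R -> \bar R}) : Prop :=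
  exists d : {measure set R -> \bar R},
    forall A : set R, measurable A -> nu A = (m A + d A)%E.

Definition preserves_nonnegativity (R : realType) (G : R -> R -> R) : Prop :=
  forall (T : R), 0 < T ->
  forall (K : nat), (0 < K)%N ->
  forall (x tt : 'I_K -> R),
    (forall k, 0 <= tt k) ->
    (forall k k' : 'I_K, (k < k')%N -> tt k < tt k') ->
    (forall k, tt k < T) ->
    (forall k : 'I_K, 0 <= \sum_(k' < K | (k' <= k)%N) x k' * G (tt k) (tt k')) ->
    forall t, 0 <= t -> t <= T ->
      0 <= \sum_(k < K | tt k <= t) x k * G t (tt k).

(** Completely monotone double kernel formula, extended to s = 0, in its two variants (left-open or right-open intervals). *)
Definition cm_double_kernel_formula (R : realType) (G : R -> R -> R)
  (mu : {measure set R -> \bar R}) (rho : R -> {measure set R -> \bar R}) : Prop :=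
  (forall s t : R, 0 <= s -> s < t ->
     ((G t s)%:E = \int[mu]_(a in setT) expeR (- rho a `]s, t]%classic))%E)
  \/
  (forall s t : R, 0 <= s -> s < t ->
     ((G t s)%:E = \int[mu]_(a in setT) expeR (- rho a `[s, t[%classic))%E).

(* Main.v *)
Require Import Defs.
From HB Require Import structures.
From mathcomp Require Import all_boot all_order all_algebra.
From mathcomp Require Import all_classical all_reals all_analysis.
From mathcomp Require Import ring lra measurable_realfun.
Import Order.TTheory GRing.Theory Num.Theory.
Import numFieldNormedType.Exports.
Local Open Scope classical_set_scope.
Local Open Scope ring_scope.

Section Alg.
Variable (R : realType) (g : R -> R -> R).
Hypothesis gpos : forall s t, 0 <= s -> s <= t -> 0 < g t s.
Hypothesis rr2 : forall p u s t, 0 <= p -> p <= u -> u <= s -> s <= t ->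
  g t u * g s p <= g t p * g s u.
Variables (X TT : nat -> R) (N : nat).
Hypothesis TT0 : forall k, 0 <= TT k.
Hypothesis TTmono : forall k, (k.+1 < N)%N -> TT k <= TT k.+1.
Definition S n t := \sum_(0 <= i < n) X i * g t (TT i).
Hypothesis Y : forall k, (k < N)%N -> 0 <= S k.+1 (TT k).

Definition lowb n u := if n is n'.+1 then TT n' <= u else 0 <= u.

Lemma lowb0 n u : lowb n u -> 0 <= u.
Proof. by case: n => [|n] //= h; apply: le_trans h. Qed.

Lemma inv n : (n <= N)%N ->
  (forall u s t, lowb n u -> u <= s -> s <= t ->
     S n s * g t u <= S n t * g s u) /\
  (forall s, lowb n s -> 0 <= S n s).
Proof.
elim: n => [|n IH] hn.
  by split => *; rewrite /S !big_mkord !big_ord0 ?mul0r.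
have [IH1 IH2] := IH (ltnW hn).
set q := TT n.
have Sn1 t : S n.+1 t = S n t + X n * g t q by rewrite /S big_nat_recr.
have hq : lowb n q.
  rewrite /q; case: n {IH IH1 IH2 Sn1 q} hn => [|n] hn /=; [exact: TT0|].
  exact: TTmono.
have q0 : 0 <= q := TT0 n.
have A s t : q <= s -> s <= t -> S n.+1 s * g t q <= S n.+1 t * g s q.
  move=> qs st; rewrite !Sn1.
  have := IH1 q s t hq qs st; lra.
have P s : q <= s -> 0 <= S n.+1 s.
  move=> qs; have := A q s (le_refl _) qs.
  have := Y _ hn; have := gpos _ _ q0 qs; have := gpos _ _ q0 (le_refl q).
  rewrite -/q => h1 h2 h3 h4.
  have h5 : 0 <= S n.+1 q * g s q by apply: mulr_ge0 => //; apply: ltW.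
  have h6 : 0 <= S n.+1 s * g q q := le_trans h5 h4.
  by rewrite pmulr_lge0 // in h6.
split => [u s t /= qu us st|s /= qs]; last exact: P.
have qs := le_trans qu us.
have h1 := A s t qs st.
have h2 := rr2 _ _ _ _ q0 qu us st.
have h3 := P s qs.
have h4 := gpos _ _ q0 qs.
have h5 : 0 <= g s u := ltW (gpos _ _ (le_trans q0 qu) us).
have h6 : g s q * (S n.+1 s * g t u) <= g s q * (S n.+1 t * g s u).
  have e1 : S n.+1 s * (g t u * g s q) <= S n.+1 s * (g t q * g s u).
    by apply: ler_wpM2l.
  have e2 : (S n.+1 s * g t q) * g s u <= (S n.+1 t * g s q) * g s u.
    by apply: ler_wpM2r.
  lra.
by rewrite ler_pM2l in h6.
Qed.

End Alg.

Lemma alg_pn (R : realType) (g : R -> R -> R) :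
  (forall s t, 0 <= s -> s <= t -> 0 < g t s) ->
  (forall p u s t, 0 <= p -> p <= u -> u <= s -> s <= t ->
     g t u * g s p <= g t p * g s u) ->
  preserves_nonnegativity g.
Proof.
move=> gpos rr2 T T0 K K0 x tt tt0 ttinc ttT hyp t t0 tT.
case: K K0 x tt tt0 ttinc ttT hyp => [//|K'] _ x tt tt0 ttinc ttT hyp.
pose X i := x (inord i); pose TT i := tt (inord i).
have conv n s : (n <= K'.+1)%N ->
    @S R g X TT n s = \sum_(i < K'.+1 | (i < n)%N) x i * g s (tt i).
  move=> hn; rewrite /S big_mkord (big_ord_widen _ (fun i => X i * g s (TT i)) hn).
  by apply: eq_bigr => i _; rewrite /X /TT inord_val.
have TT0 k : 0 <= TT k by exact: tt0.
have TTmono k : (k.+1 < K'.+1)%N -> TT k <= TT k.+1.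
  move=> hk; apply/ltW/ttinc; rewrite !inordK //; exact: ltnW.
have Y k : (k < K'.+1)%N -> 0 <= @S R g X TT k.+1 (TT k).
  move=> hk; rewrite conv //; have := hyp (inord k).
  congr (0 <= _); apply: eq_big => [i|i _]; last by [].
  by rewrite inordK.
case: (pickP (fun k => tt k <= t)) => [k1 hk1|hne]; last first.
  by rewrite big_pred0 // => k; rewrite hne.
have [k0 hk0 k0max] := @arg_maxnP _ k1 (fun k => tt k <= t) (fun i : 'I_K'.+1 => (i : nat)) hk1.
have -> : \sum_(k < K'.+1 | tt k <= t) x k * g t (tt k)
    = \sum_(k < K'.+1 | (k < k0.+1)%N) x k * g t (tt k).
  apply: eq_bigl => k; rewrite ltnS; apply/idP/idP => [|hk]; first exact: k0max.
  move: hk; rewrite leq_eqVlt => /orP[/eqP/val_inj -> //|hk].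
  exact: le_trans (ltW (ttinc _ _ hk)) hk0.
rewrite -conv //.
have [_ P] := @inv R g gpos rr2 X TT K'.+1 TT0 TTmono Y _ (ltn_ord k0).
apply: P => /=; by rewrite /TT inord_val.
Qed.

Section Ana.
Context (R : realType) (mu : {measure set R -> \bar R}).
Hypothesis mufin : (mu setT < +oo)%E.

Lemma intgb {f : R -> R} : measurable_fun setT f -> (forall x, `|f x| <= 1) ->
  mu.-integrable setT (EFin \o f).
Proof.
move=> mf hf; apply: measurable_bounded_integrable => //.
rewrite /bounded_near; near=> M => t _ /=.
apply: le_trans (hf t) _; near: M; exact: nbhs_pinfty_ge.
Unshelve. all: by end_near. Qed.

Definition unit01 (f : R -> R) := forall x, 0 <= f x <= 1.

Lemma unit01_abs {f} : unit01 f -> forall x, `|f x| <= 1.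
Proof. by move=> h x; have /andP[h0 h1] := h x; rewrite ger0_norm. Qed.

Lemma unit01M {f g} : unit01 f -> unit01 g -> unit01 (fun x => f x * g x).
Proof.
move=> hf hg x; have /andP[f0 f1] := hf x; have /andP[g0 g1] := hg x.
by rewrite mulr_ge0 //= mulr_ile1.
Qed.

Lemma cheb (A B C : R -> R) :
  measurable_fun setT A -> measurable_fun setT B -> measurable_fun setT C ->
  unit01 A -> unit01 B -> unit01 C ->
  (forall x y, x <= y -> A y <= A x) -> (forall x y, x <= y -> C y <= C x) ->
  (\int[mu]_x (B x * C x)) * (\int[mu]_x (A x * B x)) <=
  (\int[mu]_x (A x * B x * C x)) * (\int[mu]_x B x).
Proof.
move=> mA mB mC uA uB uC dA dC.
set Bt := \int[mu]_x B x; set Ab := \int[mu]_x (A x * B x).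
have Bt0 : 0 <= Bt by apply: Rintegral_ge0 => x _; have /andP[] := uB x.
pose U := [set x | Bt * A x < Ab].
pose c0 := sup (C @` U).
have key x : 0 <= (Bt * A x - Ab) * (C x - c0) * B x.
  have /andP[B0 _] := uB x.
  apply: mulr_ge0 => //.
  case: (ltgtP Ab (Bt * A x)) => h.
  - have : c0 <= C x.
      have [[y Uy]|nU] := pselect (exists y, U y); last first.
        have E0 : C @` U = set0.
          by apply/seteqP; split => z // [y Uy _]; apply: nU; exists y.
        by rewrite /c0 E0 sup0; have /andP[] := uC x.
      apply: ge_sup; first by exists (C y), y.
      move=> z [y' Uy' <-]; apply: dC.
      rewrite leNgt; apply/negP => hxy.
      have := dA _ _ (ltW hxy).
      rewrite /U /= in Uy'; move=> hA.
      have : Bt * A x <= Bt * A y' by apply: ler_wpM2l.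
      lra.
    move=> hc; apply: mulr_ge0; lra.
  - have : C x <= c0.
      apply: ub_le_sup; last by exists x.
      by exists 1 => z [y _ <-]; have /andP[] := uC y.
    move=> hc; apply: mulr_le0; lra.
  - by rewrite h subrr !mul0r.
have I0 : 0 <= \int[mu]_x ((Bt * A x - Ab) * (C x - c0) * B x).
  by apply: Rintegral_ge0 => x _; exact: key.
have mABC : measurable_fun setT (fun x => A x * B x * C x).
  by apply: measurable_funM => //; apply: measurable_funM.
have mAB : measurable_fun setT (fun x => A x * B x) by apply: measurable_funM.
have mBC : measurable_fun setT (fun x => B x * C x) by apply: measurable_funM.
have iABC := intgb mABC (unit01_abs (unit01M (unit01M uA uB) uC)).
have iAB := intgb mAB (unit01_abs (unit01M uA uB)).
have iBC := intgb mBC (unit01_abs (unit01M uB uC)).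
have iB := intgb mB (unit01_abs uB).
rewrite (@eq_Rintegral _ _ _ mu setT (fun x => Bt * (A x * B x * C x) - Ab * (B x * C x)
   - ((c0 * Bt) * (A x * B x) - (c0 * Ab) * B x))) in I0; last first.
  by move=> x _; ring.
have iZ k f : mu.-integrable setT (EFin \o f) ->
    mu.-integrable setT (EFin \o (fun x => k * f x)).
  by move=> hf; exact: (integrableZl measurableT k hf).
have iBB f g : mu.-integrable setT (EFin \o f) -> mu.-integrable setT (EFin \o g) ->
    mu.-integrable setT (EFin \o (fun x => f x - g x)).
  move=> hf hg; rewrite (_ : EFin \o _ = ((EFin \o f) \- (EFin \o g))%E).
    exact: (integrableB measurableT).
  by apply/funext => x; rewrite /= EFinB.
rewrite RintegralB // ?RintegralB // ?RintegralZl // in I0;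
  try (by apply: iBB; apply: iZ); try (by apply: iZ).
rewrite -/Bt -/Ab in I0.
nra.
Qed.


Lemma pos_int (f : R -> R) : (0 < mu setT)%E -> measurable_fun setT f ->
  unit01 f -> (forall x, 0 < f x) -> (forall x y, x <= y -> f y <= f x) ->
  0 < \int[mu]_x f x.
Proof.
move=> mu0 mf uf fpos df.
rewrite lt_neqAle Rintegral_ge0 ?andbT; last by move=> x _; have /andP[] := uf x.
apply/negP => /eqP H0.
have fin := integrable_fin_num measurableT (intgb mf (unit01_abs uf)).
have I0 : (\int[mu]_x (f x)%:E = 0)%E.
  by rewrite -(fineK fin); congr EFin; exact: (esym H0).
pose E (n : nat) := [set x : R | x <= n%:R].
have mE n : measurable (E n).
  by rewrite /E -set_itvNyc; exact: measurable_itv.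
have negE n : mu.-negligible (E n).
  exists (E n); split => //.
  have h : ((f n%:R)%:E * mu (E n) <= 0)%E.
    rewrite -I0 -integral_cst //.
    apply: (@le_trans _ _ (\int[mu]_(x in E n) (f x)%:E)%E).
      apply: ge0_le_integral => //.
      - by move=> x _; rewrite lee_fin; apply: ltW.
      - by apply/measurable_EFinP; exact: measurable_funS mf.
      - by move=> x Ex; rewrite lee_fin; apply: df.
    apply: ge0_subset_integral => //.
      exact/measurable_EFinP.
    by move=> x _; rewrite lee_fin; apply: ltW.
  rewrite pmule_rle0 ?lte_fin // in h.
  by apply/eqP; rewrite eq_le h measure_ge0.
have := negligible_bigcup negE.
have -> : \bigcup_n E n = setT.
  apply/seteqP; split => // x _; exists (Num.truncn `|x|).+1 => //.
  rewrite /E /=; apply/ltW/(le_lt_trans (ler_norm x)); exact: truncnS_gt.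
move=> [A [_ A0 TA]].
have : A = setT by apply/seteqP; split.
by move=> AT; move: mu0; rewrite -AT A0 ltxx.
Qed.

End Ana.

Section Glue.
Context (R : realType) (mu : {measure set R -> \bar R})
  (rho : R -> {measure set R -> \bar R}) (G : R -> R -> R)
  (J : R -> R -> set R).
Hypothesis mJ : forall s t, measurable (J s t).
Hypothesis J0 : forall s, J s s = set0.
Hypothesis JU : forall p u t, p <= u -> u <= t -> J p t = J p u `|` J u t.
Hypothesis JI : forall p u t, p <= u -> u <= t -> J p u `&` J u t = set0.
Hypothesis Jsub : forall s t, J s t `<=` `[s, t].
Hypothesis rhoK : forall a, finite_on_compacts (rho a).
Hypothesis rhoM : forall a b : R, a <= b -> measure_le_diff (rho a) (rho b).
Hypothesis mu0 : (0 < mu setT)%E.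
Hypothesis mufin : (mu setT < +oo)%E.
Hypothesis hG : forall s t, 0 <= s -> s < t ->
  ((G t s)%:E = \int[mu]_(a in setT) expeR (- rho a (J s t)))%E.
Hypothesis Gd : forall t, 0 <= t -> G t t = fine (mu setT).

Let r a s t := fine (rho a (J s t)).

Let rfin a s t : rho a (J s t) = (r a s t)%:E.
Proof.
rewrite /r fineK // ge0_fin_numE ?measure_ge0 //.
have h := rhoK a _ (@segment_compact R s t).
apply: (le_lt_trans _ h).
by apply: le_measure => //; rewrite inE //; exact: measurable_itv.
Qed.

Let r0 a s t : 0 <= r a s t.
Proof. by rewrite -lee_fin -rfin measure_ge0. Qed.

Let rmono a b s t : a <= b -> r a s t <= r b s t.
Proof.
move=> ab; have [d hd] := rhoM _ _ ab.
by rewrite -lee_fin -!rfin hd // leeDl // measure_ge0.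
Qed.

Let radd a p u t : p <= u -> u <= t -> r a p t = r a p u + r a u t.
Proof.
move=> pu ut; apply: EFin_inj; rewrite EFinD -!rfin (JU _ _ _ pu ut).
by rewrite measureU // (JI _ _ _ pu ut).
Qed.

Let rss a s : r a s s = 0.
Proof. by apply: EFin_inj; rewrite -rfin J0 measure0. Qed.

Let e s t a := expR (- r a s t).

Let eu s t : @unit01 R (e s t).
Proof.
move=> a; rewrite /e expR_ge0 /= expR_le1 oppr_le0; exact: r0.
Qed.

Let ed s t : forall x y, x <= y -> e s t y <= e s t x.
Proof. by move=> x y xy; rewrite /e ler_expR lerN2 rmono. Qed.

Let em s t : measurable_fun setT (e s t).
Proof. by apply: nonincreasing_measurable => // x y xy; apply: ed. Qed.

Let emul p u t a : p <= u -> u <= t -> e p t a = e p u a * e u t a.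
Proof. by move=> pu ut; rewrite /e (radd a _ _ _ pu ut) opprD expRD. Qed.

Let Grep s t : 0 <= s -> s <= t -> G t s = \int[mu]_a e s t a.
Proof.
move=> s0; rewrite le_eqVlt => /orP[/eqP <-|st].
  rewrite Gd //; under eq_Rintegral do rewrite /e rss oppr0 expR0.
  by rewrite Rintegral_cst // mul1r.
have h := hG _ _ s0 st.
rewrite (_ : (\int[mu]_(a in setT) expeR (- rho a (J s t)))%E
  = (\int[mu]_(a in setT) (e s t a)%:E)%E) in h; last first.
  by apply: eq_integral => a _; rewrite rfin.
by rewrite /Rintegral -h.
Qed.

Lemma G_pos s t : 0 <= s -> s <= t -> 0 < G t s.
Proof.
move=> s0 st; rewrite Grep //; apply: pos_int => //.
- by move=> a; exact: expR_gt0.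
- exact: ed.
Qed.

Lemma G_rr2 p u s t : 0 <= p -> p <= u -> u <= s -> s <= t ->
  G t u * G s p <= G t p * G s u.
Proof.
move=> p0 pu us st.
have u0 := le_trans p0 pu; have s0 := le_trans u0 us.
have ps := le_trans pu us; have ut := le_trans us st.
rewrite !Grep //.
have cb := @cheb R mu mufin (e p u) (e u s) (e s t) (em _ _) (em _ _) (em _ _)
  (eu _ _) (eu _ _) (eu _ _) (ed _ _) (ed _ _).
rewrite [\int[mu]_a e u t a](@eq_Rintegral _ _ _ mu setT (fun a => e u s a * e s t a)); last first.
  by move=> a _; rewrite (emul _ _ _ a us st).
rewrite [\int[mu]_a e p s a](@eq_Rintegral _ _ _ mu setT (fun a => e p u a * e u s a)); last first.
  by move=> a _; rewrite (emul _ _ _ a pu us).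
rewrite [\int[mu]_a e p t a](@eq_Rintegral _ _ _ mu setT (fun a => e p u a * e u s a * e s t a)); last first.
  by move=> a _; rewrite (emul _ _ _ a pu ut) (emul _ _ _ a us st) mulrA.
exact: cb.
exact: le_trans ps st.
Qed.

Lemma G_pn : preserves_nonnegativity G.
Proof. by apply: alg_pn; [exact: G_pos | exact: G_rr2]. Qed.

End Glue.

Section Itv.
Context (R : realType).
Implicit Types p u s t : R.

Lemma Joc0 s : `]s, s]%classic = set0 :> set R.
Proof. by apply/seteqP; split => x //=; rewrite in_itv /=; lra. Qed.
Lemma Jco0 s : `[s, s[%classic = set0 :> set R.
Proof. by apply/seteqP; split => x //=; rewrite in_itv /=; lra. Qed.

Lemma JocU p u t : p <= u -> u <= t -> `]p, t]%classic = `]p, u]%classic `|` `]u, t]%classic :> set R.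
Proof.
move=> pu ut; apply/seteqP; split => x /=; rewrite !in_itv /=.
  by move=> /andP[px xt]; case: (leP x u) => xu; [left|right];
    rewrite ?andbT ?andTb //; try (apply/andP; split); lra.
by case => /andP[h1 h2]; apply/andP; split; lra.
Qed.

Lemma JcoU p u t : p <= u -> u <= t -> `[p, t[%classic = `[p, u[%classic `|` `[u, t[%classic :> set R.
Proof.
move=> pu ut; apply/seteqP; split => x /=; rewrite !in_itv /=.
  by move=> /andP[px xt]; case: (ltP x u) => xu; [left|right];
    rewrite ?andbT ?andTb //; try (apply/andP; split); lra.
by case => /andP[h1 h2]; apply/andP; split; lra.
Qed.

Lemma JocI p u t : `]p, u]%classic `&` `]u, t]%classic = set0 :> set R.
Proof.
apply/seteqP; split => x //= [].
by rewrite /= !in_itv /= => /andP[h1 h2] /andP[h3 h4]; lra.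
Qed.

Lemma JcoI p u t : `[p, u[%classic `&` `[u, t[%classic = set0 :> set R.
Proof.
apply/seteqP; split => x //= [].
by rewrite /= !in_itv /= => /andP[h1 h2] /andP[h3 h4]; lra.
Qed.

Lemma Jocsub s t : `]s, t]%classic `<=` (`[s, t]%classic : set R).
Proof. by move=> x /=; rewrite !in_itv /= => /andP[h1 h2]; apply/andP; split; lra. Qed.
Lemma Jcosub s t : `[s, t[%classic `<=` (`[s, t]%classic : set R).
Proof. by move=> x /=; rewrite !in_itv /= => /andP[h1 h2]; apply/andP; split; lra. Qed.

End Itv.

Theorem mainTheorem4 (R : realType) (mu : {measure set R -> \bar R})
  (rho : R -> {measure set R -> \bar R}) (G : R -> R -> R) :
  finite_on_compacts mu ->
  (forall a, finite_on_compacts (rho a)) ->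
  (forall a, supported_on_Rplus (rho a)) ->
  (forall a b : R, a <= b -> measure_le_diff (rho a) (rho b)) ->
  (0 < mu setT)%E -> (mu setT < +oo)%E ->
  cm_double_kernel_formula G mu rho ->
  (forall t : R, 0 <= t -> G t t = fine (mu setT)) ->
  preserves_nonnegativity G.
Proof.
move=> muK rhoK rhoP rhoM mu0 mufin [hG|hG] Gd.
- apply: (@G_pn R mu rho G (fun s t => `]s, t]%classic) _ _ _ _ _ rhoK rhoM mu0 mufin hG Gd).
  + by move=> s t; exact: measurable_itv.
  + exact: Joc0.
  + exact: JocU.
  + by move=> p u t _ _; exact: JocI.
  + exact: Jocsub.
- apply: (@G_pn R mu rho G (fun s t => `[s, t[%classic) _ _ _ _ _ rhoK rhoM mu0 mufin hG Gd).
  + by move=> s t; exact: measurable_itv.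
  + exact: Jco0.
  + exact: JcoU.
  + by move=> p u t _ _; exact: JcoI.
  + exact: Jcosub.
Qed.
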